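(* Let $G$ be a finite group, $m\ge 3$ an integer, $R,L,T$ Cayley subsets of $G$, $S\subseteq G$ with $|R|=|L|=|T|-|S|+1$, and $x\in G\setminus S$. Let $\Theta$ be the graph with vertex set $G\times\{0,\dots,m-1\}$ (writing $g_i$ for $(g,i)$, $G_i=G\times\{i\}$) whose edges are: $\{g_0,(rg)_0\}$ ($g\in G,r\in R$); $\{g_1,(lg)_1\}$ ($g\in G,l\in L$); $\{g_0,(sg)_1\}$ ($g\in G,s\in S$); $\{g_i,(tg)_i\}$ ($i\in\{2,\dots,m-1\}$, $g\in G$, $t\in T$); $\{g_i,g_{i+1}\}$ ($g\in G$, $i\in\{1,\dots,m-2\}$); $\{g_0,(xg)_{m-1}\}$ ($g\in G$). Suppose that (a) $\mathrm{BiCay}(G,R,L,S)$ is a $2$-GRR, and (b) for each $i\in\{2,\dots,m-1\}$, $[\Theta(1_0)]\not\cong[\Theta(1_i)]$ and $[\Theta(1_1)]\not\cong[\Theta(1_i)]$. Then $\Theta$ is an $m$-GRR for $G$.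
   Context: A Cayley subset is $X\subseteq G$ with $X=X^{-1}$ and $1\notin X$. $\mathrm{BiCay}(G,R,L,S)$ is the graph with vertex set $G\times\{0,1\}$ and edges $\{g_0,(rg)_0\}$, $\{g_1,(lg)_1\}$, $\{g_0,(sg)_1\}$ for $g\in G$, $r\in R$, $l\in L$, $s\in S$. For a vertex $v$, $\Theta(v)$ is its neighbourhood and $[\Theta(v)]$ the subgraph of $\Theta$ induced on it. An $m$-GRR for $G$ is a finite regular simple graph with a semiregular automorphism group isomorphic to $G$ having $m$ vertex-orbits (here the maps $y_i\mapsto(yg)_i$) and whose full automorphism group is isomorphic to $G$. *)

(* Defs.v *)
From mathcomp Require Import all_boot all_fingroup.
Set Implicit Arguments. Unset Strict Implicit. Unset Printing Implicit Defensive.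
Local Open Scope group_scope.

Section Defs.
Variable gT : finGroupType.

Definition cayley_subset (X : {set gT}) : Prop := X^-1 = X /\ 1 \notin X.

Definition rho (n : nat) (g : gT) (v : gT * 'I_n) : gT * 'I_n := (v.1 * g, v.2).

Definition nbhd (V : finType) (e : rel V) (u : V) : {set V} := [set w | e u w].

(* [Theta(u)] is isomorphic to [Theta(w)] (induced subgraphs on neighbourhoods). *)
Definition nbhd_iso (V : finType) (e : rel V) (u w : V) : Prop :=
  exists f : V -> V,
    [/\ {in nbhd e u &, injective f},
        f @: nbhd e u = nbhd e w &
        {in nbhd e u &, forall a b, e (f a) (f b) = e a b}].

Definition is_aut (V : finType) (e : rel V) (p : {perm V}) : Prop :=
  forall a b, e (p a) (p b) = e a b.

(* n-GRR for G: finite regular simple graph on G x {0..n-1}, the maps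
   rho g (y_i |-> (yg)_i) form a semiregular group of automorphisms with n
   vertex-orbits, and the full automorphism group is exactly {rho g | g in G}
   (i.e. Aut(Gamma) = R(G), which is isomorphic to G). *)
Definition is_mGRR (n : nat) (e : rel (gT * 'I_n)) : Prop :=
  [/\ irreflexive e, symmetric e &
      (exists k, forall v, #|nbhd e v| = k)] /\
  [/\ (forall g a b, e (rho g a) (rho g b) = e a b),
      (forall g (v : gT * 'I_n), rho g v = v -> g = 1),
      #|[set [set rho g v | g : gT] | v : gT * 'I_n]| = n &
      (forall p : {perm gT * 'I_n}, is_aut e p ->
         exists g : gT, forall v, p v = rho g v)].

Definition bicay_gen (R L S : {set gT}) (u v : gT * 'I_2) : bool :=
  let: (g, i) := u in let: (h, j) := v in
  [|| [&& (i == 0%N :> nat), (j == 0%N :> nat) & h * g^-1 \in R],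
      [&& (i == 1%N :> nat), (j == 1%N :> nat) & h * g^-1 \in L] |
      [&& (i == 0%N :> nat), (j == 1%N :> nat) & h * g^-1 \in S]].

Definition bicay (R L S : {set gT}) : rel (gT * 'I_2) :=
  fun u v => bicay_gen R L S u v || bicay_gen R L S v u.

Definition theta_gen (m : nat) (R L S T : {set gT}) (x : gT)
    (u v : gT * 'I_m) : bool :=
  let: (g, i) := u in let: (h, j) := v in
  [|| [&& (i == 0%N :> nat), (j == 0%N :> nat) & h * g^-1 \in R],
      [&& (i == 1%N :> nat), (j == 1%N :> nat) & h * g^-1 \in L],
      [&& (i == 0%N :> nat), (j == 1%N :> nat) & h * g^-1 \in S],
      [&& (2 <= i)%N, (i == j :> nat) & h * g^-1 \in T],
      [&& (1 <= i)%N, (i.+1 == j :> nat) & h == g] |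
      [&& (i == 0%N :> nat), (j == (m.-1)%N :> nat) & h * g^-1 == x]].

Definition theta (m : nat) (R L S T : {set gT}) (x : gT) : rel (gT * 'I_m) :=
  fun u v => theta_gen R L S T x u v || theta_gen R L S T x v u.

End Defs.

(* Main.v *)
Require Import Defs.
From mathcomp Require Import all_boot all_fingroup zify.
Local Open Scope group_scope.
Set Implicit Arguments. Unset Strict Implicit.


Ltac natsplit := repeat match goal with |- context[?a == ?b] => let t := type of a in unify t nat; let E := fresh "E" in case E: (a == b); try (exfalso; lia) end.
Ltac bfin := repeat (simpl; first [done | let E := fresh "E" in case E: (_ == _); rewrite ?E | let E := fresh "E" in case E: (_ \in _); rewrite ?E ]).

Lemma cayV (gT : finGroupType) (X : {set gT}) h : cayley_subset X -> (h^-1 \in X) = (h \in X).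
Proof. by case=> HX _; rewrite -{1}HX memV_invg. Qed.

Lemma theta_rho (gT : finGroupType) (m : nat) (R L S T : {set gT}) x g (a b : gT * 'I_m) :
  theta R L S T x (rho g a) (rho g b) = theta R L S T x a b.
Proof.
case: a b => [a i] [b j]; rewrite /theta /theta_gen /rho /=.
rewrite !invMg !mulgA !mulgK (inj_eq (mulIg g)) (inj_eq (mulIg g)). done.
Qed.

Lemma rho_inj (gT : finGroupType) (m : nat) (g : gT) : injective (@rho gT m g).
Proof. by move=> [a i] [b j] [/mulIg -> ->]. Qed.

Lemma rhoK (gT : finGroupType) (m : nat) (g : gT) (v : gT * 'I_m) : rho g (rho g^-1 v) = v.
Proof. by case: v => a i; rewrite /rho /= mulgKV. Qed.

Lemma rhoKV (gT : finGroupType) (m : nat) (g : gT) (v : gT * 'I_m) : rho g^-1 (rho g v) = v.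
Proof. by case: v => a i; rewrite /rho /= mulgK. Qed.

Lemma nb0 (gT : finGroupType) n (R L S T : {set gT}) x :
  cayley_subset R ->
  nbhd (@theta gT n.+3 R L S T x) (1, ord0) =
  (x, ord_max) |: (setX R [set ord0] :|: setX S [set inord 1]).
Proof.
move=> cR; apply/setP => -[h [j Hj]].
rewrite !inE /theta /theta_gen /= invg1 mulg1 mul1g cayV // xpair_eqE.
rewrite -!val_eqE /= inordK //.
case: j Hj => [|[|j]] Hj /=; bfin.
Qed.

Lemma nb1 (gT : finGroupType) n (R L S T : {set gT}) x :
  cayley_subset L ->
  nbhd (@theta gT n.+3 R L S T x) (1, inord 1) =
  (1, inord 2) |: (setX L [set inord 1] :|: setX S^-1 [set ord0]).
Proof.
move=> cL; apply/setP => -[h [j Hj]].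
rewrite !inE /theta /theta_gen /= !inordK // invg1 mulg1 mul1g (cayV _ cL) xpair_eqE (eq_sym 1 h).
rewrite -!val_eqE /= !inordK //.
case: j Hj => [|[|j]] Hj /=; bfin; lia.
Qed.

Lemma nbk (gT : finGroupType) n (R L S T : {set gT}) x k (Hk : k < n) :
  cayley_subset T ->
  nbhd (@theta gT n.+3 R L S T x) (1, inord k.+2) =
  (1, inord k.+1) |: ((1, inord k.+3) |: setX T [set inord k.+2]).
Proof.
move=> cT; apply/setP => -[h [j Hj]].
rewrite !inE /theta /theta_gen /=.
have H1 : k.+1 < n.+3 by lia.
have H2 : k.+2 < n.+3 by lia.
have H3 : k.+3 < n.+3 by lia.
rewrite (inordK H2) invg1 mulg1 mul1g (cayV _ cT) !xpair_eqE (eq_sym 1 h) -!val_eqE /=.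
rewrite (inordK H1) (inordK H2) (inordK H3).
case: j Hj => [|[|j]] Hj /=; natsplit; bfin.
Qed.

Lemma nbtop (gT : finGroupType) n (R L S T : {set gT}) x :
  cayley_subset T ->
  nbhd (@theta gT n.+3 R L S T x) (1, ord_max) =
  (1, inord n.+1) |: ((x^-1, ord0) |: setX T [set ord_max]).
Proof.
move=> cT; apply/setP => -[h [j Hj]].
rewrite !inE /theta /theta_gen /= invg1 mulg1 mul1g (cayV _ cT) !xpair_eqE (eq_sym 1 h).
rewrite -!val_eqE /= !inordK //.
rewrite (can2_eq (@invgK _) (@invgK _)).
case: j Hj => [|[|j]] Hj /=; natsplit; bfin.
Qed.


Lemma cardX1 (gT : finGroupType) n (A : {set gT}) (i : 'I_n) : #|setX A [set i]| = #|A|.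
Proof. by rewrite cardsX cards1 muln1. Qed.

Lemma cardUdisj (T : finType) (A B : {set T}) : (forall v, v \in A -> v \in B -> False) ->
  #|A :|: B| = (#|A| + #|B|)%N.
Proof.
move=> H; rewrite cardsU.
suff -> : A :&: B = set0 by rewrite cards0 subn0.
by apply/setP => v; rewrite !inE; apply/negP => /andP[/H]; move=> F /F.
Qed.

Lemma nb_deg (gT : finGroupType) n (R L S T : {set gT}) x (i : 'I_n.+3) :
  cayley_subset R -> cayley_subset L -> cayley_subset T ->
  #|R| = #|L| -> (#|R| + #|S| = #|T| + 1)%N ->
  #|nbhd (@theta gT n.+3 R L S T x) (1, i)| = (#|T| + 2)%N.
Proof.
move=> cR cL cT HRL HRS.
case: i => [[|[|k]] Hk].
- have -> : Ordinal Hk = ord0 by apply: val_inj.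
  rewrite nb0 // cardsU1 cardUdisj; last first.
    by move=> [h j]; rewrite !inE => /andP[_ /eqP ->] /andP[_ /eqP/(congr1 val)]; rewrite /= inordK.
  rewrite !cardX1 !inE -!val_eqE /= inordK //= !andbF /=. by rewrite addnC HRS -addnA.
- have -> : Ordinal Hk = inord 1 by apply: val_inj; rewrite /= inordK.
  rewrite nb1 // cardsU1 cardUdisj; last first.
    by move=> [h j]; rewrite !inE => /andP[_ /eqP ->] /andP[_ /eqP/(congr1 val)]; rewrite /= inordK.
  rewrite !cardX1 card_invg !inE /= -!val_eqE /= !inordK //= !andbF /=. by rewrite -HRL addnC HRS -addnA.
- case: (ltngtP k n) => Hkn; [| lia |].
  + have -> : Ordinal Hk = inord k.+2 by apply: val_inj; rewrite /= inordK.
    rewrite nbk // cardsU1 cardsU1 cardX1 !inE /= !xpair_eqE -!val_eqE /= !inordK //; try lia.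
  + subst k. have -> : Ordinal Hk = ord_max by apply: val_inj.
    rewrite nbtop // cardsU1 cardsU1 cardX1 !inE /= !xpair_eqE -!val_eqE /= !inordK //.
    rewrite !andbF /=; lia.
Qed.


Lemma nbhd_rho (gT : finGroupType) (m : nat) (R L S T : {set gT}) x (h : gT) (i : 'I_m) :
  nbhd (theta R L S T x) (h, i) = rho h^-1 @^-1: nbhd (theta R L S T x) (1, i).
Proof.
apply/setP => w; rewrite !inE.
have -> : ((1 : gT), i) = rho h^-1 (h, i) by rewrite /rho /= mulgV.
by rewrite theta_rho.
Qed.

Lemma deg_all (gT : finGroupType) n (R L S T : {set gT}) x (v : gT * 'I_n.+3) :
  cayley_subset R -> cayley_subset L -> cayley_subset T ->
  #|R| = #|L| -> (#|R| + #|S| = #|T| + 1)%N ->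
  #|nbhd (@theta gT n.+3 R L S T x) v| = (#|T| + 2)%N.
Proof.
move=> cR cL cT HRL HRS; case: v => h i.
by rewrite nbhd_rho card_preimset ?nb_deg //; apply: rho_inj.
Qed.

Lemma orbits_card (gT : finGroupType) (m : nat) :
  #|[set [set rho g v | g : gT] | v : gT * 'I_m]| = m.
Proof.
have E : forall v : gT * 'I_m, [set rho g v | g : gT] = setX [set: gT] [set v.2].
  move=> [h i]; apply/setP => -[h' j]; rewrite !inE /=.
  apply/imsetP/eqP => [[g _ [_ ->]] // | ->].
  by exists (h^-1 * h') => //; rewrite /rho /= mulKVg.
have -> : [set [set rho g v | g : gT] | v : gT * 'I_m] =
          [set setX [set: gT] [set i] | i : 'I_m].
  apply/setP => A; apply/imsetP/imsetP => [[v _ ->] | [i _ ->]].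
    by exists v.2 => //; rewrite E.
  by exists (1, i) => //; rewrite E.
rewrite card_imset ?cardsT ?card_ord //.
move=> i j /setP /(_ (1, i)); rewrite !inE eqxx /=.
by move/esym/eqP.
Qed.

Lemma theta_irr (gT : finGroupType) n (R L S T : {set gT}) x :
  cayley_subset R -> cayley_subset L -> cayley_subset T ->
  irreflexive (@theta gT n.+3 R L S T x).
Proof.
move=> [_ R1] [_ L1] [_ T1] [h i]; rewrite /theta /theta_gen /= mulgV.
rewrite (negbTE R1) (negbTE L1) (negbTE T1) !andbF /=.
natsplit; rewrite /= ?andbF //.
Qed.


Definition emb (gT : finGroupType) n (a : gT * 'I_2) : gT * 'I_n.+3 :=
  (a.1, widen_ord (isT : 2 <= n.+3) a.2).
Definition proj (gT : finGroupType) n (w : gT * 'I_n.+3) : gT * 'I_2 :=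
  (w.1, inord (val w.2)).

Lemma emb_proj (gT : finGroupType) n (w : gT * 'I_n.+3) : (val w.2 < 2)%N -> emb n (proj w) = w.
Proof. by case: w => h i /= Hi; congr pair; apply: val_inj; rewrite /= inordK. Qed.

Lemma emb_inj (gT : finGroupType) n : injective (@emb gT n).
Proof. move=> [g i] [h j] [-> E]; congr pair; apply: val_inj; exact: E. Qed.

Lemma bicay_theta (gT : finGroupType) n (R L S T : {set gT}) x a b :
  bicay R L S a b = theta R L S T x (@emb gT n a) (emb n b).
Proof.
case: a b => [g [[|[|i]] Hi]] [h [[|[|j]] Hj]] //=;
rewrite /bicay /theta /bicay_gen /theta_gen /= ?orbF //.
Qed.

Lemma step_edge (gT : finGroupType) n (R L S T : {set gT}) x h h' (i j : 'I_n.+3) :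
  (1 <= i)%N -> (i < j)%N -> theta R L S T x (h, i) (h', j) -> h' = h /\ val j = i.+1.
Proof.
move=> H1 H2; rewrite /theta /theta_gen /=; natsplit; rewrite /= ?andbF ?orbF //.
all: move=> /= /andP[_ /eqP ->]; split => //; lia.
Qed.

Lemma stay_low (gT : finGroupType) n (R L S T : {set gT}) x
  (p : {perm gT * 'I_n.+3}) :
  (forall i0 i1 i : 'I_n.+3, val i0 = 0%N -> val i1 = 1%N -> (2 <= i)%N ->
     ~ nbhd_iso (@theta gT n.+3 R L S T x) (1, i0) (1, i) /\
     ~ nbhd_iso (@theta gT n.+3 R L S T x) (1, i1) (1, i)) ->
  is_aut (theta R L S T x) p ->
  forall v, (val v.2 < 2)%N -> (val (p v).2 < 2)%N.
Proof.
move=> Hb Hp [h i] /= Hi.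
case E: (p (h, i)) => [h' j] /=.
rewrite ltnNge; apply/negP => Hj.
pose f := fun a => rho h'^-1 (p (rho h a)).
have faut : forall a b, theta R L S T x (f a) (f b) = theta R L S T x a b.
  by move=> a b; rewrite /f theta_rho Hp theta_rho.
have finj : injective f.
  by move=> a b /rho_inj /perm_inj /rho_inj.
have f1 : f (1, i) = (1, j) by rewrite /f /rho /= mul1g E /= mulgV.
have iso : nbhd_iso (theta R L S T x) (1, i) (1, j).
  exists f; split.
  - by move=> a b _ _; apply: finj.
  - apply/setP => w; apply/imsetP/idP.
      by move=> [a Ha ->]; rewrite inE -f1 faut -inE.
    rewrite inE => Hw.
    exists (rho h^-1 ((p^-1)%g (rho h' w))).
      by rewrite inE -faut f1 /f (rhoK h ((p^-1)%g (rho h' w))) permKV rhoKV.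
    by rewrite /f (rhoK h ((p^-1)%g (rho h' w))) permKV rhoKV.
  - by move=> a b _ _; apply: faut.
case: i Hi E f1 iso => [[|[|i]] Hi] // _ _ iso.
- have := (Hb ord0 (inord 1) j erefl (inordK (isT : 1 < n.+3)) Hj).1.
  have -> : (ord0 : 'I_n.+3) = Ordinal Hi by apply: val_inj.
  by apply.
- have := (Hb ord0 (inord 1) j erefl (inordK (isT : 1 < n.+3)) Hj).2.
  have -> : (inord 1 : 'I_n.+3) = Ordinal Hi by apply: val_inj; rewrite /= inordK.
  by apply.
Qed.


Lemma auto_main (gT : finGroupType) n (R L S T : {set gT}) x
  (p : {perm gT * 'I_n.+3}) :
  is_mGRR (bicay R L S) ->
  (forall i0 i1 i : 'I_n.+3, val i0 = 0%N -> val i1 = 1%N -> (2 <= i)%N ->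
     ~ nbhd_iso (@theta gT n.+3 R L S T x) (1, i0) (1, i) /\
     ~ nbhd_iso (@theta gT n.+3 R L S T x) (1, i1) (1, i)) ->
  is_aut (theta R L S T x) p ->
  exists g : gT, forall v, p v = rho g v.
Proof.
move=> HGRR Hb Hp.
have low := stay_low Hb Hp.
have embK : forall a, emb n (proj (p (emb n a))) = p (emb n a).
  by move=> a; apply: emb_proj; apply: low; rewrite /= ltn_ord.
pose f2 := fun a => proj (p (emb n a)).
have f2inj : injective f2.
  move=> a b H; apply: (@emb_inj _ n); apply: (@perm_inj _ p).
  by rewrite -embK -[RHS]embK; congr (emb n _); exact: H.
pose P2 := perm f2inj.
have autP2 : is_aut (bicay R L S) P2.
  move=> a b; rewrite !permE (@bicay_theta _ n R L S T x) /f2 !embK Hp.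
  by rewrite -(@bicay_theta _ n R L S T x).
case: HGRR => _ [_ _ _ Haut].
have [g Hg] := Haut P2 autP2.
have Hlow : forall w, (val w.2 < 2)%N -> p w = rho g w.
  move=> w Hw; rewrite -(emb_proj Hw) -embK.
  have := Hg (proj w); rewrite permE /f2 => ->.
  by [].
pose q := fun w => rho g^-1 (p w).
have qaut : forall a b, theta R L S T x (q a) (q b) = theta R L S T x a b.
  by move=> a b; rewrite /q theta_rho Hp.
have qinj : injective q by move=> a b /rho_inj /perm_inj.
have claim : forall k (w : gT * 'I_n.+3), (val w.2 <= k.+1)%N -> q w = w.
  elim => [|k IH].
    by move=> w Hw; rewrite /q Hlow ?rhoKV.
  move=> [h j] /= Hj.
  case: (leqP j k.+1) => Hjk; first exact: IH.
  have Ej : (j : nat) = k.+2 by lia.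
  have Hk1 : (k.+1 < n.+3)%N by have := ltn_ord j; lia.
  pose u : gT * 'I_n.+3 := (h, Ordinal Hk1).
  have qu : q u = u by apply: IH.
  have euw : theta R L S T x u (h, j).
    rewrite /theta /theta_gen /= Ej eqxx /=.
    by rewrite eqxx !orbT.
  have e2 : theta R L S T x u (q (h, j)) by rewrite -{1}qu qaut.
  case E: (q (h, j)) e2 => [h' j'] e2.
  case: (leqP j' k.+1) => Hj'.
    by apply: qinj; rewrite E IH.
  have [Eh Ej'] := step_edge (i := Ordinal Hk1) (isT : (1 <= k.+1)%N) Hj' e2.
  rewrite Eh; congr pair; apply: val_inj; rewrite Ej' /=; lia.
exists g => v.
rewrite -[p v](rhoK g); congr (rho g _).
by apply: (claim (val v.2)); rewrite leqnSn.
Qed.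

Theorem lemma4p2 (gT : finGroupType) (m : nat) (R L T S : {set gT}) (x : gT) :
  (3 <= m)%N ->
  cayley_subset R -> cayley_subset L -> cayley_subset T ->
  #|R| = #|L| -> (#|R| + #|S| = #|T| + 1)%N ->
  x \notin S ->
  is_mGRR (bicay R L S) ->
  (forall i0 i1 i : 'I_m, val i0 = 0%N -> val i1 = 1%N -> (2 <= i)%N ->
     ~ nbhd_iso (@theta gT m R L S T x) (1, i0) (1, i) /\
     ~ nbhd_iso (@theta gT m R L S T x) (1, i1) (1, i)) ->
  is_mGRR (@theta gT m R L S T x).
Proof.
case: m => [|[|[|n]]] // _ cR cL cT HRL HRS _ HGRR Hb.
split.
- split.
  + exact: theta_irr.
  + by move=> a b; rewrite /theta orbC.
  + by exists (#|T| + 2)%N => v; apply: deg_all.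
- split.
  + by move=> g a b; apply: theta_rho.
  + by move=> g [h i] [E]; rewrite -(mulKg h g) E mulVg.
  + exact: orbits_card.
  + by move=> p Hp; apply: (auto_main HGRR Hb Hp).
Qed.
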